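(* Let $c,d\geq 1$ be integers and let $\xi\in\mathbb{F}_q\setminus\{0,1\}$. Then \[ a^{(1^{c+d})_{t-\xi}}_{(1^c)_{t-\xi}\,(1^d)_{t-\xi}}=q^{cd}\begin{bmatrix} c+d\\ c\end{bmatrix}_q , \] where $\begin{bmatrix} m\\ b\end{bmatrix}_q=\frac{[m][m-1]\cdots[m-b+1]}{[b]!}$ is the $q$-binomial coefficient, with $[m]=\frac{q^m-1}{q-1}$ and $[b]!=[b][b-1]\cdots[1]$.
   Context: Let $G_n=GL_n(q)$ over the finite field $\mathbb{F}_q$, with $G_n\subset G_{n+1}$ via $g\mapsto \mathrm{diag}(g,1)$ and $G_\infty=\bigcup_n G_n$. Let $\Phi$ be the set of monic irreducible polynomials in $\mathbb{F}_q[t]$ other than $t$, and $\mathcal{P}(\Phi)$ the set of partition-valued functions $\boldsymbol{\lambda}$ on $\Phi$ with finitely many nonempty values; set $\|\boldsymbol{\lambda}\|=\sum_f \deg(f)\,|\boldsymbol{\lambda}(f)|$. Conjugacy classes of $G_n$ correspond to types $\boldsymbol{\lambda}$ with $\|\boldsymbol{\lambda}\|=n$ (via the $\mathbb{F}_q[t]$-module $\bigoplus_{f,i}\mathbb{F}_q[t]/(f)^{\boldsymbol{\lambda}_i(f)}$). The modified type of an element of type $\boldsymbol{\lambda}$ is obtained by subtracting $1$ from each part of $\boldsymbol{\lambda}(t-1)$ (keeping the other $\boldsymbol{\lambda}(f)$); elements of $G_\infty$ are conjugate iff they have the same modified type. For a modified type $\boldsymbol{\mu}$, let $K_{\boldsymbol{\mu}}(n)$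 be the sum of elements of $G_n$ of modified type $\boldsymbol{\mu}$ (zero if $\|\boldsymbol{\mu}\|+\ell(\boldsymbol{\mu}(t-1))>n$); these form a basis of the center of $\mathbb{Z}[G_n]$, and one writes $K_{\boldsymbol{\lambda}}(n)K_{\boldsymbol{\mu}}(n)=\sum_{\boldsymbol{\nu}} a^{\boldsymbol{\nu}}_{\boldsymbol{\lambda}\boldsymbol{\mu}}(n)K_{\boldsymbol{\nu}}(n)$. When $\|\boldsymbol{\nu}\|=\|\boldsymbol{\lambda}\|+\|\boldsymbol{\mu}\|$, $a^{\boldsymbol{\nu}}_{\boldsymbol{\lambda}\boldsymbol{\mu}}(n)$ is independent of $n$ and is denoted $a^{\boldsymbol{\nu}}_{\boldsymbol{\lambda}\boldsymbol{\mu}}$. For $f\in\Phi$ and a partition $\lambda$, $(\lambda)_f\in\mathcal{P}(\Phi)$ denotes the function with value $\lambda$ at $f$ and $\emptyset$ elsewhere; thus $(1^c)_{t-\xi}$ is the modified type of $\mathrm{diag}(\xi,\dots,\xi,1,\dots)$ with $c$ entries $\xi$. *)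

(* Defs.v *)
From HB Require Import structures.
From mathcomp Require Import all_boot all_order all_algebra all_field.
Set Implicit Arguments. Unset Strict Implicit. Unset Printing Implicit Defensive.
Import GRing.Theory Num.Theory.
Local Open Scope ring_scope.

(* G_n = GL_n(F) is realised as the invertible matrices of 'M[F]_n,
   with group law matrix multiplication. *)

Definition diag_xi (F : finFieldType) (n c : nat) (xi : F) : 'M[F]_n :=
  diag_mx (\row_(i < n) if (i < c)%N then xi else 1).

(* The set of elements of G_n of modified type (1^c)_{t-xi}: the
   G_n-conjugacy class of diag(xi^c, 1^(n-c)); empty when c > n
   (then K_{(1^c)_{t-xi}}(n) = 0). *)
Definition class_xi (F : finFieldType) (n c : nat) (xi : F) : {set 'M[F]_n} :=
  [set g : 'M[F]_n | (c <= n)%N &&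
     [exists P : 'M[F]_n, (P \in unitmx) && (g == invmx P *m diag_xi n c xi *m P)]].

(* Coefficient of the group element z in the product of the class sums
   K_lambda(n) K_mu(n) in Z[G_n], for classes A and B.  When z lies in the
   class nu, this is the structure constant a^nu_{lambda mu}(n). *)
Definition prod_coeff (F : finFieldType) (n : nat) (A B : {set 'M[F]_n})
  (z : 'M[F]_n) : nat :=
  #|[set p : 'M[F]_n * 'M[F]_n | (p.1 \in A) && (p.2 \in B) && (p.1 *m p.2 == z)]|.

Definition qint (q m : nat) : rat := ((q ^ m)%:R - 1) / (q%:R - 1).
Definition qbinom (q m b : nat) : rat :=
  (\prod_(i < b) qint q (m - i)) / (\prod_(i < b) qint q i.+1).

(* Main.v *)
Require Import Defs.
From mathcomp Require Import all_boot all_order all_algebra all_field.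
From mathcomp Require Import zify ring.
Set Implicit Arguments. Unset Strict Implicit. Unset Printing Implicit Defensive.
Import GRing.Theory Num.Theory.
Local Open Scope ring_scope.

Section S.
Variable F : finFieldType.
Variable xi : F.

Lemma diag_xi_block c d :
  diag_xi (c + d) c xi = block_mx (xi%:M) 0 0 (1%:M).
Proof.
apply/matrixP => i j; rewrite /diag_xi !mxE -val_eqE /=.
case: splitP => i' Ei; rewrite !mxE; case: splitP => j' Ej; rewrite !mxE Ei Ej ?ltn_ord.
- by rewrite val_eqE.
- by rewrite (ltn_eqF (leq_trans (ltn_ord i') (leq_addr _ _))).
- by rewrite (gtn_eqF (leq_trans (ltn_ord j') (leq_addr _ _))).
- by rewrite eqn_add2l val_eqE.
Qed.

Lemma conj_sub n (P A : 'M[F]_n) a : P \in unitmx ->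
  invmx P *m A *m P - a%:M = invmx P *m (A - a%:M) *m P.
Proof.
move=> uP; rewrite mulmxBr mulmxBl; congr (_ - _).
by rewrite mul_mx_scalar -scalemxAl mulVmx // scalemx1.
Qed.

Lemma conj_mul n (P A B : 'M[F]_n) : P \in unitmx ->
  invmx P *m A *m P *m (invmx P *m B *m P) = invmx P *m (A *m B) *m P.
Proof.
by move=> uP; rewrite !mulmxA mulmxK.
Qed.

Lemma rank_conj n (P A : 'M[F]_n) : P \in unitmx ->
  \rank (invmx P *m A *m P) = \rank A.
Proof.
move=> uP; rewrite mxrankMfree ?row_free_unit //.
apply/eqP; rewrite eqn_leq mxrankM_maxr /=.
by rewrite -{1}(mulKVmx uP A) mxrankM_maxr.
Qed.

Definition isc n c (X : 'M[F]_n) :=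
  ((X - 1%:M) *m (X - xi%:M) == 0) && (\rank (X - 1%:M) == c).

Lemma scal_comm n (X : 'M[F]_n) a b :
  (X - a%:M) *m (X - b%:M) = (X - b%:M) *m (X - a%:M).
Proof.
rewrite !mulmxBl !mulmxBr !mul_mx_scalar !mul_scalar_mx !scale_scalar_mx mulrC.
rewrite !opprB !addrA [LHS]addrAC [RHS]addrAC; congr (_ + _); exact: addrAC.
Qed.


Lemma cap_ker0 n (X : 'M[F]_n) a b : a != b ->
  (kermx (X - a%:M) :&: kermx (X - b%:M))%MS = 0.
Proof.
move=> nab; set S := (_ :&: _)%MS.
have Sa : S *m (X - a%:M) = 0 by apply/eqP; rewrite -sub_kermx capmxSl.
have Sb : S *m (X - b%:M) = 0 by apply/eqP; rewrite -sub_kermx capmxSr.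
have : S *m ((X - a%:M) - (X - b%:M)) = 0 by rewrite mulmxBr Sa Sb subr0.
rewrite opprB addrC addrA subrK -raddfB /= mul_mx_scalar => /eqP.
by rewrite scalemx_eq0 subr_eq0 eq_sym (negbTE nab) => /eqP.
Qed.

Lemma rank_sum n (X : 'M[F]_n) : xi != 1 -> (X - 1%:M) *m (X - xi%:M) = 0 ->
  addn (\rank (X - 1%:M)) (\rank (X - xi%:M)) = n.
Proof.
move=> nx1 H.
have H' : (X - xi%:M) *m (X - 1%:M) = 0 by rewrite scal_comm.
have s1 : (X - 1%:M <= kermx (X - xi%:M))%MS by rewrite sub_kermx H.
have s2 : (X - xi%:M <= kermx (X - 1%:M))%MS by rewrite sub_kermx H'.
have r1 := mxrankS s1; have r2 := mxrankS s2.
rewrite mxrank_ker in r1; rewrite mxrank_ker in r2.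
have := mxrank_sum_cap (kermx (X - xi%:M)) (kermx (X - 1%:M)).
rewrite cap_ker0 // mxrank0 addn0 !mxrank_ker.
have := rank_leq_col (kermx (X - xi%:M) + kermx (X - 1%:M))%MS.
have := rank_leq_row (X - 1%:M); have := rank_leq_row (X - xi%:M).
lia.
Qed.


Lemma blk_sub c d (A : 'M[F]_c) B C (E : 'M[F]_d) a :
  block_mx A B C E - a%:M = block_mx (A - a%:M) B C (E - a%:M).
Proof.
by rewrite [a%:M]scalar_mx_block opp_block_mx add_block_mx !oppr0 !addr0.
Qed.

Lemma rank_scalar n (a : F) : a != 0 -> \rank (a%:M : 'M[F]_n) = n.
Proof.
by move=> na; rewrite mxrank_unit // unitmxE det_scalar unitfE expf_neq0.
Qed.

Lemma base_of m n (A : 'M[F]_(m, n)) r : \rank A = r ->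
  exists B : 'M_(r, n), (B :=: A)%MS.
Proof. by move=> <-; exists (row_base A); exact: eq_row_base. Qed.

Lemma class_char n c (X : 'M[F]_n) : xi != 0 -> xi != 1 ->
  (X \in class_xi n c xi) = isc c X.
Proof.
move=> nx0 nx1; rewrite /class_xi inE.
case: (leqP c n) => [cn|]; last first.
  move=> nc; rewrite /= /isc; case: eqP => // _ /=.
  by rewrite ltn_eqF // (leq_ltn_trans (rank_leq_row _) nc).
rewrite /=; move: X; rewrite -(subnKC cn); move: (n - c)%N => d X.
rewrite diag_xi_block.
apply/existsP/idP.
  case=> P /andP [uP /eqP ->].
  rewrite /isc !conj_sub // conj_mul // rank_conj // !blk_sub subrr.
  rewrite mulmx_block !mulmx0 !mul0mx !addr0 subrr mulmx0 block_mx0 mulmx0 mul0mx eqxx /=.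
  by rewrite rank_diag_block_mx mxrank0 addn0 -raddfB rank_scalar // subr_eq0.
case/andP => /eqP H /eqP rk.
have rs := rank_sum nx1 H.
have [Bx eBx] : exists B : 'M_(c, c + d), (B :=: kermx (X - xi%:M))%MS.
  by apply: base_of; rewrite mxrank_ker; lia.
have [B1 eB1] : exists B : 'M_(d, c + d), (B :=: kermx (X - 1%:M))%MS.
  by apply: base_of; rewrite mxrank_ker; lia.
have Bx0 : Bx *m (X - xi%:M) = 0 by apply/eqP; rewrite -sub_kermx eBx.
have B10 : B1 *m (X - 1%:M) = 0 by apply/eqP; rewrite -sub_kermx eB1.
set P := col_mx Bx B1.
have PX : P *m X = block_mx xi%:M 0 0 1%:M *m P.
  rewrite mul_col_mx mul_block_col !mul0mx addr0 add0r mul1mx.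
  move: Bx0 B10; rewrite !mulmxBr mul_mx_scalar mulmx1 => /eqP; rewrite subr_eq0 => /eqP ->.
  by move/eqP; rewrite subr_eq0 => /eqP ->; rewrite mul_scalar_mx.
have uP : P \in unitmx.
  rewrite -row_free_unit /row_free -addsmxE.
  have := mxrank_sum_cap Bx B1.
  have : (Bx :&: B1 <= kermx (X - xi%:M) :&: kermx (X - 1%:M))%MS.
    by apply: capmxS; rewrite ?eBx ?eB1.
  rewrite cap_ker0 // submx0 => /eqP ->; rewrite mxrank0 addn0 => ->.
  rewrite eBx eB1 !mxrank_ker; apply/eqP; lia.
exists P; rewrite uP /=; apply/eqP.
by rewrite -mulmxA -PX mulKmx.
Qed.


Lemma class_conj n c (g Q : 'M[F]_n) : xi != 0 -> xi != 1 -> Q \in unitmx ->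
  g \in class_xi n c xi -> invmx Q *m g *m Q \in class_xi n c xi.
Proof.
move=> nx0 nx1 uQ; rewrite !class_char // /isc !conj_sub // conj_mul // rank_conj //.
by case/andP => /eqP -> ->; rewrite mulmx0 mul0mx eqxx.
Qed.

Lemma conj_inj n (Q g h : 'M[F]_n) : Q \in unitmx ->
  invmx Q *m g *m Q = invmx Q *m h *m Q -> g = h.
Proof.
move=> uQ /(congr1 (fun M => Q *m M *m invmx Q)).
by rewrite !mulmxA !mulmxK // mulmxV // !mul1mx.
Qed.

Lemma pc_conj_le n c d (z Q : 'M[F]_n) : xi != 0 -> xi != 1 -> Q \in unitmx ->
  (prod_coeff (class_xi n c xi) (class_xi n d xi) z <=
   prod_coeff (class_xi n c xi) (class_xi n d xi) (invmx Q *m z *m Q))%N.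
Proof.
move=> nx0 nx1 uQ; rewrite /prod_coeff.
pose f := fun p : 'M[F]_n * 'M[F]_n => (invmx Q *m p.1 *m Q, invmx Q *m p.2 *m Q).
have finj : injective f.
  move=> [a b] [a' b'] [] /(conj_inj uQ) -> /(conj_inj uQ) -> //.
rewrite -(card_imset _ finj); apply: subset_leq_card.
apply/subsetP => _ /imsetP [[a b] + ->]; rewrite in_set /= => /andP [/andP [Ha Hb] /eqP Hab].
by rewrite in_set /= !class_conj // conj_mul // Hab eqxx.
Qed.

Lemma pc_conj n c d (z Q : 'M[F]_n) : xi != 0 -> xi != 1 -> Q \in unitmx ->
  prod_coeff (class_xi n c xi) (class_xi n d xi) (invmx Q *m z *m Q) =
  prod_coeff (class_xi n c xi) (class_xi n d xi) z.
Proof.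
move=> nx0 nx1 uQ; apply/eqP; rewrite eqn_leq pc_conj_le // andbT.
have := @pc_conj_le n c d (invmx Q *m z *m Q) (invmx Q) nx0 nx1.
rewrite unitmx_inv invmxK !mulmxA mulmxV // mul1mx mulmxK //.
by apply.
Qed.


Lemma fix_bottom m k (g : 'M[F]_(m + k)) :
  (row_mx 0 1%:M : 'M_(k, m + k)) *m g = row_mx 0 1%:M ->
  g = block_mx (ulsubmx g) (ursubmx g) 0 1%:M.
Proof.
rewrite -{1}[g]submxK mul_row_block !mul0mx !add0r !mul1mx => /eq_row_mx [E1 E2].
by rewrite -{1}[g]submxK E1 E2.
Qed.

Lemma stab_ker p n (S : 'M[F]_(p, n)) (g : 'M[F]_n) : (S <= kermx (g - 1%:M))%MS -> S *m g = S.
Proof. by rewrite sub_kermx mulmxBr mulmx1 subr_eq0 => /eqP. Qed.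

Lemma W_fix c d k (g h : 'M[F]_(c + d + k)) : xi != 1 ->
  isc c g -> isc d h -> g *m h = block_mx xi%:M 0 0 1%:M ->
  (row_mx 0 1%:M : 'M_(k, c + d + k)) *m g = row_mx 0 1%:M /\
  (row_mx 0 1%:M : 'M_(k, c + d + k)) *m h = row_mx 0 1%:M.
Proof.
move=> nx1 /andP [_ /eqP rg] /andP [_ /eqP rh] Dgh.
set Fg := kermx (g - 1%:M); set Fh := kermx (h - 1%:M).
set K := kermx (block_mx xi%:M 0 0 1%:M - (1%:M : 'M[F]_(c + d + k))).
have Sg : (Fg :&: Fh)%MS *m g = (Fg :&: Fh)%MS by apply: stab_ker; exact: capmxSl.
have Sh : (Fg :&: Fh)%MS *m h = (Fg :&: Fh)%MS by apply: stab_ker; exact: capmxSr.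
have sub : (Fg :&: Fh <= K)%MS.
  by rewrite sub_kermx -Dgh mulmxBr mulmxA Sg Sh mulmx1 subrr.
have rK : \rank K = k.
  rewrite mxrank_ker blk_sub subrr rank_diag_block_mx mxrank0 addn0 -raddfB rank_scalar.
    lia.
  by rewrite subr_eq0.
have := mxrank_sum_cap Fg Fh; have := rank_leq_col (Fg + Fh)%MS.
rewrite !mxrank_ker rg rh => r1 r2.
have KS : (K <= Fg :&: Fh)%MS.
  rewrite -(mxrank_leqif_sup sub).2 eqn_leq mxrankS //= rK.
  have := rank_leq_row g; have := rank_leq_row h. lia.
have WK : ((row_mx 0 1%:M : 'M_(k, c + d + k)) <= K)%MS.
  rewrite sub_kermx blk_sub !subrr mul_row_block !mulmx0 !mul0mx !addr0 row_mx0.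
  by [].
split; apply: stab_ker; apply: (submx_trans WK); apply: (submx_trans KS).
  exact: capmxSl.
exact: capmxSr.
Qed.


Lemma blk_poly m k (X : 'M[F]_m) (Y : 'M[F]_(m, k)) :
  (block_mx X Y 0 1%:M - 1%:M) *m (block_mx X Y 0 1%:M - xi%:M) = 0 ->
  (X - 1%:M) *m (X - xi%:M) = 0 /\ X *m Y = xi *: Y.
Proof.
rewrite !blk_sub subrr mulmx_block !mulmx0 !mul0mx !addr0 -(@block_mx0 _ m k m k).
case/eq_block_mx => H1 H2 _ _; split => //.
move: H2; rewrite mulmxBl mul1mx mulmxBr mulmx1 mul_mx_scalar addrA subrK.
by move/eqP; rewrite subr_eq0 => /eqP.
Qed.

Lemma blk_isc_eq m k c (X : 'M[F]_m) :
  isc c (block_mx X 0 0 (1%:M : 'M_k)) = isc c X.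
Proof.
rewrite /isc !blk_sub subrr mulmx_block !mulmx0 !mul0mx !addr0.
rewrite rank_diag_block_mx mxrank0 addn0 -(@block_mx0 _ m k m k).
apply/andP/andP => [[/eqP /eq_block_mx [-> _ _ _] ->] | [/eqP -> ->]] //.
Qed.


Lemma conj_scalar n (P : 'M[F]_n) a : P \in unitmx -> invmx P *m a%:M *m P = a%:M.
Proof. by move=> uP; rewrite mul_mx_scalar -scalemxAl mulVmx // scalemx1. Qed.

Lemma main_count c d k : xi != 0 -> xi != 1 ->
  prod_coeff (class_xi (c + d + k) c xi) (class_xi (c + d + k) d xi)
     (block_mx xi%:M 0 0 1%:M) = #|class_xi (c + d) c xi|.
Proof.
move=> nx0 nx1.
pose f := fun X : 'M[F]_(c + d) =>
  (block_mx X 0 0 (1%:M : 'M_k), block_mx (xi *: invmx X) 0 0 (1%:M : 'M_k)).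
have finj : injective f by move=> X X' [] /eq_block_mx [].
rewrite /prod_coeff -(card_imset _ finj); apply: eq_card => -[g h].
rewrite in_set /=; apply/idP/idP.
  case/andP => /andP [Hg Hh] /eqP Dgh.
  rewrite class_char // in Hg; rewrite class_char // in Hh.
  have [Wg Wh] := W_fix nx1 Hg Hh Dgh.
  move: (fix_bottom Wg) (fix_bottom Wh).
  move: (ulsubmx g) (ursubmx g) (ulsubmx h) (ursubmx h) => X Y X' Y' Eg Eh.
  subst g h.
  have [_ HgP] := blk_poly (eqP (proj1 (andP Hg))).
  have [_ HhP] := blk_poly (eqP (proj1 (andP Hh))).
  move: Dgh; rewrite mulmx_block !mulmx0 !mul0mx !mulmx1 ?mul1mx !addr0 ?add0r.
  case/eq_block_mx => E1 E2 _ _.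
  have eXY : X *m Y' = - Y by apply/eqP; rewrite -addr_eq0 E2.
  have eY' : Y' = X *m Y'.
    apply: (scalerI nx0).
    by rewrite scalemxAr -HhP mulmxA E1 mul_scalar_mx HhP.
  have Y'0 : Y' = 0.
    have eY : Y = - Y' by rewrite eY' eXY opprK.
    move: HgP; rewrite eY mulmxN scalerN => /oppr_inj.
    rewrite -{1}eY' => /eqP; rewrite -{1}[Y']scale1r -subr_eq0 -scalerBl scalemx_eq0.
    by rewrite subr_eq0 eq_sym (negbTE nx1) /= => /eqP.
  have Y0 : Y = 0 by rewrite -[Y]opprK -eXY Y'0 mulmx0 oppr0.
  subst Y Y'.
  have uX : X \in unitmx.
    have : X *m (xi^-1 *: X') = 1%:M.
      by rewrite -scalemxAr E1 scale_scalar_mx mulVf.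
    by case/mulmx1_unit.
  have eX' : X' = xi *: invmx X.
    by rewrite -mul_mx_scalar -E1 mulKmx.
  apply/imsetP; exists X; last by rewrite /f eX'.
  by rewrite class_char // -(blk_isc_eq k).
case/imsetP => X HX [-> ->].
have [P uP eX] : exists2 P, P \in unitmx & X = invmx P *m block_mx xi%:M 0 0 1%:M *m P.
  move: HX; rewrite /class_xi in_set => /andP [_ /existsP [P /andP [uP /eqP eX]]].
  by exists P => //; rewrite -diag_xi_block.
rewrite class_char // in HX.
set Y := invmx P *m block_mx 1%:M 0 0 xi%:M *m P.
have XY : X *m Y = xi%:M.
  rewrite eX conj_mul // mulmx_block !mulmx0 !mul0mx !mulmx1 !addr0 ?add0r.
  by rewrite mul1mx -scalar_mx_block conj_scalar.
have uX : X \in unitmx.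
  have : X *m (xi^-1 *: Y) = 1%:M.
    by rewrite -scalemxAr XY scale_scalar_mx mulVf.
  by case/mulmx1_unit.
have eY : xi *: invmx X = Y by rewrite -mul_mx_scalar -XY mulKmx.
rewrite eY !class_char // !blk_isc_eq HX /=.
apply/andP; split.
  rewrite /isc !conj_sub // conj_mul // rank_conj // !blk_sub !subrr.
  rewrite mulmx_block !mulmx0 !mul0mx !addr0 ?add0r block_mx0 mulmx0 mul0mx eqxx /=.
  by rewrite rank_diag_block_mx mxrank0 add0n -raddfB rank_scalar // subr_eq0.
by rewrite mulmx_block !mulmx0 !mul0mx !mulmx1 !addr0 ?add0r XY.
Qed.


Definition U n := [set A : 'M[F]_n | A \in unitmx].

Lemma cardU n : (0 < n)%N ->
  #|U n| = (#|F| ^ 'C(n, 2) * \prod_(1 <= i < n.+1) (#|F| ^ i - 1))%N.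
Proof.
case: n => // n _; rewrite -card_GL // cardsT /= card_sub.
by apply: eq_card => A; rewrite !inE.
Qed.


Lemma invmxM' n (A B : 'M[F]_n) : A \in unitmx -> B \in unitmx ->
  invmx (A *m B) = invmx B *m invmx A.
Proof.
move=> uA uB; have uAB : A *m B \in unitmx by rewrite unitmx_mul uA.
have H : invmx B *m invmx A *m (A *m B) = 1%:M.
  by rewrite mulmxA mulmxKV // mulVmx.
by rewrite -[RHS](mulmxK uAB) H mul1mx.
Qed.

Lemma scal_fix m n (v : 'M[F]_(m, n)) : xi != 1 -> v = xi *: v -> v = 0.
Proof.
move=> nx1 /eqP; rewrite -{1}[v]scale1r -subr_eq0 -scalerBl scalemx_eq0.
by rewrite subr_eq0 eq_sym (negbTE nx1) /= => /eqP.
Qed.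

Lemma class_card c d : xi != 0 -> xi != 1 ->
  (#|class_xi (c + d) c xi| * (#|U c| * #|U d|) = #|U (c + d)|)%N.
Proof.
move=> nx0 nx1.
set D := block_mx (xi%:M : 'M[F]_c) 0 0 (1%:M : 'M[F]_d).
set Cm := [set Q : 'M[F]_(c + d) | (Q \in unitmx) && (Q *m D == D *m Q)].
have cardCm : #|Cm| = (#|U c| * #|U d|)%N.
  rewrite -cardsX.
  have inj : injective (fun p : 'M[F]_c * 'M[F]_d => block_mx p.1 0 0 p.2).
    by move=> [a b] [a' b'] /eq_block_mx [/= -> _ _ ->].
  rewrite -(card_imset _ inj); apply: eq_card => Q.
  apply/idP/idP.
    rewrite inE => /andP [uQ /eqP cQ].
    move: uQ cQ; rewrite -[Q]submxK.
    move: (ulsubmx Q) (ursubmx Q) (dlsubmx Q) (drsubmx Q) => a b e f.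
    rewrite /D !mulmx_block !mulmx0 !mul0mx !mulmx1 ?mul1mx !addr0 ?add0r.
    rewrite mul_mx_scalar !mul_scalar_mx => uQ /eq_block_mx [_ Hb He _].
    rewrite mul_mx_scalar in He.
    have b0 := scal_fix nx1 Hb; have e0 := scal_fix nx1 (esym He).
    subst b e.
    move: uQ; rewrite unitmxE det_ublock unitrM -!unitmxE => /andP [ua uf].
    by apply/imsetP; exists (a, f) => //; rewrite !inE ua.
  case/imsetP => [[a f]]; rewrite !inE /= => /andP [ua uf] ->.
  rewrite unitmxE det_ublock unitrM -!unitmxE ua uf /=.
  rewrite /D !mulmx_block !mulmx0 !mul0mx !mulmx1 ?mul1mx !addr0 ?add0r.
  by rewrite scalar_mxC.
have fib : forall X, X \in class_xi (c + d) c xi ->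
    #|[set P in U (c + d) | invmx P *m D *m P == X]| = #|Cm|.
  move=> X; rewrite /class_xi in_set => /andP [_ /existsP [P0 /andP [u0 /eqP eX]]].
  rewrite diag_xi_block -/D in eX.
  have inj : injective (fun Q : 'M[F]_(c + d) => Q *m P0).
    by apply: (can_inj (g := fun Q => Q *m invmx P0)) => Q; rewrite mulmxK.
  rewrite -[#|Cm|](card_imset _ inj); apply: eq_card => P; apply/idP/idP.
    rewrite !inE => /andP [uP /eqP eP].
    apply/imsetP; exists (P *m invmx P0); last by rewrite mulmxKV.
    rewrite inE unitmx_mul uP unitmx_inv u0 /=.
    have := congr1 (fun M => P *m M *m invmx P0) eP.
    rewrite eX /= !mulmxA mulmxV // mul1mx mulmxK // => ->.
    by [].
  case/imsetP => Q; rewrite /Cm inE => /andP [uQ /eqP cQ] ->.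
  rewrite !inE unitmx_mul uQ u0 /= invmxM' // eX.
  have eD : invmx Q *m D *m Q = D by rewrite -mulmxA -cQ mulKmx.
  by rewrite !mulmxA -[invmx P0 *m invmx Q *m D]mulmxA -[invmx P0 *m _ *m Q]mulmxA eD.
rewrite -cardCm -[#|U (c + d)|]sum1_card.
rewrite (partition_big (fun P => invmx P *m D *m P) (mem (class_xi (c + d) c xi))) /=.
  rewrite -sum_nat_const; apply: eq_bigr => X HX.
  rewrite -(fib X HX) -sum1_card; apply: eq_bigl => P; rewrite !inE.
  by [].
move=> P; rewrite inE => uP.
rewrite /class_xi in_set leq_addr /=; apply/existsP; exists P.
by rewrite uP diag_xi_block eqxx.
Qed.

End S.

Definition Pn (q n : nat) := (\prod_(1 <= i < n.+1) (q ^ i - 1))%N.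
Definition An (q c d : nat) := (\prod_(i < c) (q ^ (c + d - i) - 1))%N.

Lemma A_P q c d : (An q c d * Pn q d)%N = Pn q (c + d).
Proof.
elim: c => [|c IH]; first by rewrite /An big_ord0 mul1n.
rewrite /An big_ord_recl /= subn0.
have -> : (\prod_(i < c) (q ^ (c.+1 + d - bump 0 i) - 1))%N = An q c d.
  by apply: eq_bigr => i _; rewrite /bump /= add1n addSn subSS.
by rewrite -mulnA IH addSn /Pn [in RHS]big_nat_recr //= mulnC.
Qed.

Lemma bin2_add c d : 'C(c + d, 2) = ('C(c, 2) + 'C(d, 2) + c * d)%N.
Proof.
elim: d => [|d IH]; first by rewrite addn0 bin0n muln0 !addn0.
rewrite addnS !binS !bin1 IH mulnS; lia.
Qed.

Lemma Pn_ord q c : Pn q c = (\prod_(i < c) (q ^ i.+1 - 1))%N.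
Proof. by rewrite /Pn big_add1 big_mkord. Qed.

Lemma Pn_gt0 q c : (1 < q)%N -> (0 < Pn q c)%N.
Proof.
move=> q1; rewrite Pn_ord prodn_gt0 // => i.
have := expn_gt0 q i; rewrite expnS; nia.
Qed.

Lemma prod_qint q c (f : nat -> nat) : (1 < q)%N ->
  \prod_(i < c) qint q (f i) =
  (\prod_(i < c) (q ^ f i - 1))%N%:R / (q%:R - 1) ^+ c.
Proof.
move=> q1; rewrite /qint prodf_div prodr_const card_ord natr_prod; congr (_ / _).
apply: eq_bigr => i _; rewrite natrB // expn_gt0; lia.
Qed.

Lemma qbinom_eq q c d : (1 < q)%N ->
  qbinom q (c + d) c = (An q c d)%:R / (Pn q c)%:R.
Proof.
move=> q1; rewrite /qbinom (prod_qint c (fun i => c + d - i)%N) //.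
rewrite (prod_qint c succn) // Pn_ord /An.
have K : (q%:R - 1 : rat) ^+ c != 0.
  by rewrite expf_neq0 // subr_eq0 pnatr_eq1; lia.
have P : ((\prod_(i < c) (q ^ i.+1 - 1))%N%:R : rat) != 0.
  by rewrite pnatr_eq0 -lt0n -Pn_ord Pn_gt0.
by rewrite invf_div mulrA divfK.
Qed.

Lemma final_arith q c d N : (1 < q)%N ->
  (N * ((q ^ 'C(c, 2) * Pn q c) * (q ^ 'C(d, 2) * Pn q d)))%N =
    (q ^ 'C(c + d, 2) * Pn q (c + d))%N ->
  (N%:R : rat) = (q ^ (c * d))%:R * qbinom q (c + d) c.
Proof.
move=> q1 H; rewrite qbinom_eq //.
have E : (N * Pn q c = q ^ (c * d) * An q c d)%N.
  have pos : (0 < q ^ 'C(c, 2) * q ^ 'C(d, 2) * Pn q d)%N.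
    by rewrite !muln_gt0 !expn_gt0 Pn_gt0 // andbT; apply/andP; split; lia.
  apply/eqP; rewrite -(eqn_pmul2r pos); apply/eqP.
  move: H; rewrite -A_P bin2_add !expnD.
  move: (q ^ 'C(c, 2))%N (q ^ 'C(d, 2))%N (q ^ (c * d))%N (Pn q c) (Pn q d) (An q c d) => a b e P Q A.
  nia.
have Pne : ((Pn q c)%:R : rat) != 0 by rewrite pnatr_eq0 -lt0n Pn_gt0.
apply: (mulIf Pne); rewrite -natrM E natrM -mulrA divfK //.
Qed.

Unset Implicit Arguments. Set Strict Implicit. Set Printing Implicit Defensive.

Theorem proposition4p6 (F : finFieldType) (xi : F) (c d : nat) :
  (1 <= c)%N -> (1 <= d)%N -> xi != 0 -> xi != 1 ->
  forall (n : nat), (c + d <= n)%N ->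
  forall z : 'M[F]_n, z \in class_xi n (c + d) xi ->
  ((prod_coeff (class_xi n c xi) (class_xi n d xi) z)%:R : rat)
    = (#|F| ^ (c * d))%:R * qbinom #|F| (c + d) c.
Proof.
move=> c1 d1 nx0 nx1 n Hn z Hz.
move: z Hz; rewrite -(subnKC Hn); move: (n - (c + d))%N => k z Hz.
have [P uP ->] : exists2 P, P \in unitmx &
    z = invmx P *m block_mx (xi%:M : 'M[F]_(c + d)) 0 0 (1%:M : 'M_k) *m P.
  move: Hz; rewrite /class_xi in_set => /andP [_ /existsP [P /andP [uP /eqP ->]]].
  by exists P => //; rewrite diag_xi_block.
rewrite pc_conj // main_count //.
apply: final_arith; first exact: card_finNzRing_gt1.
have := @class_card F xi c d nx0 nx1.
by rewrite !cardU // addn_gt0 c1.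
Qed.
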